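(* Let $T$, $\mathcal{J}=\langle N,B\rangle$, an allocation $(\mathcal{C}_s,\mathcal{B}_s)$, a node $v$ and a scenario $\sigma$ be as in the context. If $T_v$ can offer $n_v$ working VMs in scenario $\sigma$ for some integer $n_v\in(N/2,N]$, then for every integer $m$ with $0\le m\le N-n_v$, $T_v$ can offer $m$ working VMs in scenario $\sigma$ (with the same bandwidth allocation $\mathcal{B}_s$).
   Context: $T=(V,L)$ is a rooted tree whose leaves form the set $H$ of physical machines (PMs) and whose internal nodes are switches; for a node $u$, $T_u$ is the subtree rooted at $u$ and $l_u$ is the link from $u$ to its parent. A request is $\mathcal{J}=\langle N,B\rangle$ with $N$ a positive integer and $B\ge0$. An allocation is a pair $(\mathcal{C}_s,\mathcal{B}_s)$ with $\mathcal{C}_s:H\to\mathbb{Z}_{\ge0}$ (VM slots allocated on each PM) and $\mathcal{B}_s:L\to\mathbb{R}_{\ge0}$ (bandwidth allocated on each link). A scenario is either ''no failure'' or the failure of a single PM $F\in H$. The subtree $T_v$ can offer $n$ working VMs in a scenario if there is an assignment $w:H\cap T_v\to\mathbb{Z}_{\ge0}$ with $w(h)\le\mathcal{C}_s(h)$ for all $h$, $w(F)=0$ if $F$ is the failed PM, $\sum_{h\in H\cap T_v}w(h)=n$, and for every node $u$ of $T_v$ (including $u=v$, whenever $l_u$ exists) $\min\{n_u,N-n_u\}\cdot B\le\mathcal{B}_s(l_u)$, where $n_u=\sum_{h\in H\cap T_u}w(h)$. *)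

(* Defs.v *)
From HB Require Import structures.
From mathcomp Require Import all_boot all_order all_algebra.
Set Implicit Arguments. Unset Strict Implicit. Unset Printing Implicit Defensive.
Import Order.TTheory GRing.Theory Num.Theory.
Local Open Scope ring_scope.

(* A rooted tree on the finite node set V is given by its parent map:
   [par u = Some p] means p is the parent of u, i.e. the link l_u joins u to p;
   [par u = None] means u is the root.  Links are identified with their lower
   endpoint u, so a bandwidth allocation is a function V -> R (only its values
   on non-root nodes are meaningful). *)

Definition child_rel (V : finType) (par : V -> option V) : rel V :=
  fun x y => par x == Some y.

(* [anc par u x]: u is an ancestor-or-self of x, i.e. x is a node of T_u. *)
Definition anc (V : finType) (par : V -> option V) (u x : V) : bool :=
  connect (child_rel par) x u.

(* the parent map describes a rooted tree: there is a root r (no parent) that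
   every node reaches by following parents (this also forces acyclicity and the
   uniqueness of the root). *)
Definition rooted_tree (V : finType) (par : V -> option V) : Prop :=
  exists r : V, par r = None /\ forall x : V, anc par r x.

(* leaves = physical machines (nodes without children) *)
Definition is_leaf (V : finType) (par : V -> option V) (h : V) : bool :=
  [forall x, par x != Some h].

(* n_u = number of working VMs assigned in the leaves of T_u *)
Definition nsub (V : finType) (par : V -> option V) (w : V -> nat) (u : V) : nat :=
  (\sum_(h | is_leaf par h && anc par u h) w h)%N.

(* T_v can offer n working VMs in the scenario F (None = no failure,
   Some f = failure of PM f) under allocation (Cs, Bs) for request <N, B>. *)
Definition can_offer (V : finType) (par : V -> option V) (R : realFieldType)
  (N : nat) (B : R) (Cs : V -> nat) (Bs : V -> R) (F : option V) (v : V) (n : nat)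
  : Prop :=
  exists w : V -> nat,
    [/\ (forall h, is_leaf par h -> anc par v h -> (w h <= Cs h)%N),
        (forall f, F = Some f -> w f = 0%N),
        nsub par w v = n &
        (forall u, anc par v u -> par u != None ->
           Num.min ((nsub par w u)%:R) (N%:R - (nsub par w u)%:R) * B <= Bs u)].

(* Main.v *)
Require Import Defs.
From HB Require Import structures.
From mathcomp Require Import all_boot all_order all_algebra.
From mathcomp Require Import zify.
Import Order.TTheory GRing.Theory Num.Theory.
Local Open Scope ring_scope.

Lemma reduce_sum (V : finType) (P : pred V) (m k : nat) : forall w : V -> nat,
  (\sum_(h | P h) w h)%N = (m + k)%N ->
  exists w' : V -> nat, (forall h, w' h <= w h)%N /\ (\sum_(h | P h) w' h)%N = m.
Proof.
elim: k => [|k IH] w Hs.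
  by exists w; split => //; rewrite Hs addn0.
case: (pickP (fun x => P x && (0 < w x)%N)) => [h /andP [Ph wh] | Hn]; last first.
  move: Hs; rewrite big1 ?addnS //.
  move=> x Px; have := Hn x; rewrite Px /=; by case: (w x).
pose w1 := fun x => if x == h then (w h).-1 else w x.
have Hs1 : (\sum_(x | P x) w1 x)%N = (m + k)%N.
  have E : (\sum_(x | P x) w x = (\sum_(x | P x) w1 x).+1)%N.
    rewrite (bigD1 h) //= [X in _ = X.+1](bigD1 h) //=.
    have -> : w1 h = (w h).-1 by rewrite /w1 eqxx.
    rewrite [X in _ = (_ + X).+1](eq_bigr w); last by move=> x /andP [_ /negbTE Hx]; rewrite /w1 Hx.
    by move: wh; case: (w h).
  by move: Hs; rewrite E addnS => -[].
have [w' [H1 H2]] := IH w1 Hs1.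
exists w'; split => // x; apply: (leq_trans (H1 x)); rewrite /w1.
by case: eqP => [->|] //; rewrite leq_pred.
Qed.

Lemma nsub_mono (V : finType) (par : V -> option V) (w : V -> nat) (u v : V) :
  anc par v u -> (nsub par w u <= nsub par w v)%N.
Proof.
move=> Hvu; rewrite /nsub [X in (_ <= X)%N]big_mkcond [X in (X <= _)%N]big_mkcond.
apply: leq_sum => h _.
case Hl: (is_leaf par h) => //=.
case Hu: (anc par u h) => //=.
by have -> : anc par v h by rewrite /anc; apply: (connect_trans Hu Hvu).
Qed.

Theorem lemma1 (V : finType) (par : V -> option V) (R : realFieldType)
  (N : nat) (B : R) (Cs : V -> nat) (Bs : V -> R) (F : option V) (v : V)
  (nv : nat) :
  rooted_tree par ->
  (0 < N)%N -> 0 <= B ->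
  (forall u, 0 <= Bs u) ->
  (forall f, F = Some f -> is_leaf par f) ->
  (N < 2 * nv)%N -> (nv <= N)%N ->
  can_offer par N B Cs Bs F v nv ->
  forall m : nat, (m <= N - nv)%N -> can_offer par N B Cs Bs F v m.
Proof.
move=> _ _ HB _ _ H2 HN [w [Hcap Hf Hn Hbw]] m Hm.
have Hmn : (nv = m + (nv - m))%N by lia.
move: Hn; rewrite /nsub Hmn => Hn.
have [w' [Hw' Hs']] := @reduce_sum _ _ _ _ _ Hn.
exists w'; split.
- by move=> h Hl Ha; apply: leq_trans (Hw' h) (Hcap h Hl Ha).
- by move=> f Hff; have := Hw' f; rewrite (Hf f Hff); case: (w' f).
- exact: Hs'.
- move=> u Hvu Hp; apply: le_trans (Hbw u Hvu Hp).
  apply: ler_wpM2r => //.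
  have a1 : (nsub par w' u <= nsub par w u)%N by apply: leq_sum.
  have a2 : (nsub par w' u <= m)%N.
    by rewrite -Hs'; have := @nsub_mono _ _ w' _ _ Hvu; rewrite /nsub.
  have a3 : (nsub par w u <= nv)%N.
    by have := @nsub_mono _ _ w _ _ Hvu; rewrite /nsub Hn -Hmn.
  apply: (@le_trans _ _ (nsub par w' u)%:R); first by rewrite ge_min lexx.
  rewrite le_min; apply/andP; split.
    by rewrite ler_nat.
  by rewrite lerBrDr -natrD ler_nat; lia.
Qed.
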